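(* Let $L$ be an oriented classical or virtual link with $n$ components. The forbidden matrix $\mathcal{FM}(L)\in M_n(\mathbb{Z})$ is an invariant of classical and virtual links up to conjugation by a permutation matrix.
   Context: An oriented (classical or virtual) link with $n$ components is represented by a signed Gauss diagram: $n$ oriented circles, one per component, with arrows from over-crossing point to under-crossing point, each arrow carrying the sign $\pm1$ of its crossing; virtual links are equivalence classes of such diagrams under Gauss-diagram Reidemeister moves. The forbidden moves are: interchange two adjacent arrowheads, or two adjacent arrow tails, on a circle. Using forbidden and Reidemeister moves, a Gauss diagram can be reduced to one with no arrow having both endpoints on the same circle and in which, for each ordered pair $(j,k)$ of distinct circles, all arrows from circle $j$ to circle $k$ have the same sign. The forbidden quiver $\mathcal{FQ}(L)$ is obtained by shrinking each circle of this reduced diagram to a vertex; $m$ parallel arrows of sign $\varepsilon$ from vertex $j$ to vertex $k$ are recorded as a single arrow with integer label $\varepsilon m$. The forbidden matrix $\mathcal{FM}(L)$ is the $n\times n$ integer matrix whose entry in row $j$, column $k$ is the label on the arrow from vertex $j$ to vertex $k$ of $\mathcal{FQ}(L)$ (and $0$ if there is no such arrow; in particular the diagonal is $0$). *)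

(* Defs.v *)
From mathcomp Require Import all_boot all_order all_algebra all_fingroup.
From Stdlib Require Import Relations.
Set Implicit Arguments. Unset Strict Implicit. Unset Printing Implicit Defensive.
Import GRing.Theory Num.Theory.

(* An endpoint is (arrow label, is_head).  Circle [i] of a Gauss diagram on
   [n] circles is the cyclic sequence of endpoints met along its orientation
   (read linearly from some base point; the base point is moved by [rot_step]).
   [sgn a] is the sign of arrow [a] (true = +1, false = -1). *)
Record gauss (n : nat) := Gauss {
  circ : 'I_n -> seq (nat * bool);
  sgn : nat -> bool }.

Section Gauss.
Variable n : nat.
Implicit Types D : gauss n.

Definition ends D : seq (nat * bool) := flatten [seq circ D i | i <- enum 'I_n].

Definition wf D : bool :=
  uniq (ends D) && all (fun e => (e.1, ~~ e.2) \in ends D) (ends D).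

Definition adj D (x y : nat * bool) : Prop :=
  exists i s1 s2, circ D i = s1 ++ x :: y :: s2.

Definition adjo D (x y : nat * bool) (o : bool) : Prop :=
  if o then adj D x y else adj D y x.

Definition sw (x y e : nat * bool) : nat * bool :=
  if e == x then y else if e == y then x else e.

Definition erase_lbl (ls : seq nat) D (i : 'I_n) : seq (nat * bool) :=
  [seq e <- circ D i | e.1 \notin ls].

Definition same_sgn D D' := forall a, sgn D' a = sgn D a.

Definition rot_step D D' : Prop :=
  exists (i : 'I_n) k, circ D' i = rot k (circ D i) /\
    (forall j, j != i -> circ D' j = circ D j) /\ same_sgn D D'.

Definition relabel_step D D' : Prop :=
  exists f : nat -> nat, injective f /\
    (forall i, circ D' i = [seq (f e.1, e.2) | e <- circ D i]) /\
    (forall a, sgn D' (f a) = sgn D a).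

(* renumbering of the (unordered) components *)
Definition perm_step D D' : Prop :=
  exists s : 'S_n, (forall i, circ D' i = circ D (s i)) /\ same_sgn D D'.

Definition R1_step D D' : Prop :=
  exists a h, adj D' (a, h) (a, ~~ h) /\
    (forall i, circ D i = erase_lbl [:: a] D' i) /\
    (forall b, b != a -> sgn D b = sgn D' b).

Definition R2_step D D' : Prop :=
  exists a b, a != b /\ sgn D' a = ~~ sgn D' b /\
    adj D' (a, false) (b, false) /\
    (adj D' (a, true) (b, true) \/ adj D' (b, true) (a, true)) /\
    (forall i, circ D i = erase_lbl [:: a; b] D' i) /\
    (forall c, c \notin [:: a; b] -> sgn D c = sgn D' c).

(* R3 admissibility of a configuration: arrows a : T->M, b : T->B, c : M->B
   (T top, M middle, B bottom strand); oT = tail a before tail b on T,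
   oM = head a before tail c on M, oB = head b before head c on B.
   This is exactly the set of 16 configurations realised by three oriented
   lines in the plane. *)
Definition R3_ok (oT oM oB sa sb sc : bool) : bool :=
  ((sa (+) sb) == (oM (+) oB)) && ((sa (+) sc) == (oT (+) oB)).

(* R3: reverse the order of the two endpoints on each of the three segments *)
Definition R3_step D D' : Prop :=
  exists a b c oT oM oB, uniq [:: a; b; c] /\
    adjo D (a, false) (b, false) oT /\
    adjo D (a, true) (c, false) oM /\
    adjo D (b, true) (c, true) oB /\
    R3_ok oT oM oB (sgn D a) (sgn D b) (sgn D c) /\
    (forall i, circ D' i =
       [seq sw (a, false) (b, false) (sw (a, true) (c, false)
              (sw (b, true) (c, true) e)) | e <- circ D i]) /\
    same_sgn D D'.

Definition forb_step D D' : Prop :=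
  exists a b h, a != b /\ adj D (a, h) (b, h) /\
    (forall i, circ D' i = [seq sw (a, h) (b, h) e | e <- circ D i]) /\
    same_sgn D D'.

Definition reid_step D D' : Prop :=
  wf D /\ wf D' /\
  (rot_step D D' \/ relabel_step D D' \/ perm_step D D' \/
   R1_step D D' \/ R2_step D D' \/ R3_step D D').

Definition FR_step D D' : Prop :=
  reid_step D D' \/ (wf D /\ wf D' /\ forb_step D D').

Definition link_equiv : relation (gauss n) := clos_refl_sym_trans _ reid_step.
Definition FR_equiv : relation (gauss n) := clos_refl_sym_trans _ FR_step.

Definition tail_on D (a : nat) (j : 'I_n) : bool := (a, false) \in circ D j.
Definition head_on D (a : nat) (k : 'I_n) : bool := (a, true) \in circ D k.

Definition reduced D : Prop :=
  wf D /\
  (forall i a, ~~ (tail_on D a i && head_on D a i)) /\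
  (forall j k a b, tail_on D a j -> head_on D a k ->
                   tail_on D b j -> head_on D b k -> sgn D a = sgn D b).

Definition arrows D (j k : 'I_n) : seq nat :=
  [seq e.1 | e <- circ D j & (~~ e.2) && head_on D e.1 k].

(* label eps*m of the arrow j -> k of the forbidden quiver (0 if m = 0) *)
Definition fq_label D (j k : 'I_n) : int :=
  let l := arrows D j k in
  ((if sgn D (head 0%N l) then 1 else -1) * (size l)%:Z)%R.

Definition FM D : 'M[int]_n := \matrix_(j, k) fq_label D j k.

End Gauss.

(* Main.v *)
Require Import Defs.
From mathcomp Require Import all_boot all_order all_algebra all_fingroup.
From Stdlib Require Import Relations.
From mathcomp Require Import zify ring.
Set Implicit Arguments. Unset Strict Implicit. Unset Printing Implicit Defensive.
Import GRing.Theory Num.Theory.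

Section H.
Variable n : nat.
Implicit Types D : gauss n.

Definition sgnz (b : bool) : int := if b then 1%R else (-1)%R.

Definition vlk D (j k : 'I_n) : int :=
  (\sum_(e <- circ D j | ~~ e.2 && head_on D e.1 k) sgnz (sgn D e.1))%R.

Lemma count_ends D x : count_mem x (ends D) = \sum_(i < n) count_mem x (circ D i).
Proof.
rewrite /ends count_flatten -map_comp sumnE big_map.
by rewrite -[RHS]big_enum /=.
Qed.

Lemma wf_count D x i : wf D -> count_mem x (circ D i) <= 1.
Proof.
case/andP=> u _.
have := count_uniq_mem x u; rewrite count_ends => E.
have : \sum_(i < n) count_mem x (circ D i) <= 1 by rewrite E; case: (_ \in _).
by rewrite (bigD1 i) //=; apply: leq_trans; apply: leq_addr.
Qed.

Lemma wf_uniq D i : wf D -> uniq (circ D i).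
Proof.
move=> w; apply: count_mem_uniq => x.
have := wf_count x i w.
case: (boolP (x \in circ D i)) => H.
  by have := H; rewrite -has_pred1 has_count; case: (count _ _) => // [] [].
by move=> _; apply/count_memPn.
Qed.

Lemma same_circ D x i j : wf D -> x \in circ D i -> x \in circ D j -> i = j.
Proof.
case/andP=> u _ xi xj; apply/eqP; apply/negPn/negP=> nij.
have := count_uniq_mem x u; rewrite count_ends => E.
have : \sum_(i < n) count_mem x (circ D i) <= 1 by rewrite E; case: (_ \in _).
rewrite (bigD1 i) //= (bigD1 j) //=; last by rewrite eq_sym.
have ci : 0 < count_mem x (circ D i) by rewrite -has_count has_pred1.
have cj : 0 < count_mem x (circ D j) by rewrite -has_count has_pred1.
by move=> H; have := leq_trans (leq_add ci (leq_trans cj (leq_addr _ _))) H.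
Qed.

Lemma adj_mem D x y j : wf D -> adj D x y -> (x \in circ D j) = (y \in circ D j).
Proof.
move=> w [i [s1 [s2 E]]].
have xi : x \in circ D i by rewrite E mem_cat !inE eqxx orbT.
have yi : y \in circ D i by rewrite E mem_cat !inE eqxx !orbT.
apply/idP/idP => H.
  by rewrite (same_circ w H xi).
by rewrite (same_circ w H yi).
Qed.

Lemma adjo_mem D x y o j : wf D -> adjo D x y o -> (x \in circ D j) = (y \in circ D j).
Proof. by case: o => /= w H; [apply: adj_mem | rewrite (adj_mem j w H)]. Qed.

Lemma swK (x y : nat * bool) : involutive (sw x y).
Proof.
move=> e; rewrite /sw.
have [->|nx] := eqVneq e x.
  by rewrite eqxx; case: eqVneq.
have [->|ny] := eqVneq e y.
  by rewrite eqxx.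
by rewrite (negPf nx) (negPf ny).
Qed.

Lemma sw_mem (x y : nat * bool) (s : seq (nat * bool)) e :
  (x \in s) = (y \in s) -> e \in s -> sw x y e \in s.
Proof.
move=> E H; rewrite /sw.
case: eqVneq => [ex|_]; first by rewrite -E -ex.
by case: eqVneq => [ey|_]; first by rewrite E -ey.
Qed.

Lemma perm_map_self (T : eqType) (f : T -> T) (s : seq T) :
  uniq s -> injective f -> (forall e, e \in s -> f e \in s) -> perm_eq (map f s) s.
Proof.
move=> u fi fs; apply: uniq_perm => //; first by rewrite map_inj_uniq.
have u' : uniq (map f s) by rewrite map_inj_uniq.
have sub : {subset map f s <= s} by move=> x /mapP [y ys ->]; apply: fs.
have [_ E] := uniq_min_size u' sub (eq_leq (esym (size_map f s))).
exact: E.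
Qed.

Lemma vlk_perm D D' : (forall i, perm_eq (circ D' i) (circ D i)) -> same_sgn D D' ->
  forall j k, vlk D' j k = vlk D j k.
Proof.
move=> P S j k; rewrite /vlk (perm_big _ (P j)) /=.
apply: eq_big => e; first by rewrite /head_on (perm_mem (P k)).
by rewrite S.
Qed.

End H.

Section H2.
Variable n : nat.
Implicit Types D : gauss n.

Lemma adj_in D x y : adj D x y -> exists i, x \in circ D i /\ y \in circ D i.
Proof.
move=> [i [s1 [s2 E]]]; exists i.
by rewrite E !mem_cat !inE !eqxx !orbT.
Qed.

Lemma sum_L (s L : seq (nat * bool)) (P Q : pred (nat * bool)) (F : nat * bool -> int) :
  uniq s -> uniq L -> (forall e, Q e = (e \in L)) ->
  (\sum_(e <- s | P e && Q e) F e = \sum_(e <- L | P e && (e \in s)) F e)%R.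
Proof.
move=> us uL QE; rewrite -[LHS]big_filter -[RHS]big_filter; apply: perm_big; apply: uniq_perm.
- exact: filter_uniq.
- exact: filter_uniq.
move=> e; rewrite !mem_filter QE.
by case: (P e); case: (e \in s); case: (e \in L).
Qed.

Lemma R1_vlk D D' : wf D' -> R1_step D D' -> forall j k, j != k -> vlk D j k = vlk D' j k.
Proof.
move=> w [a [h [Hadj [Hc Hs]]]] j k jk.
rewrite /vlk Hc /erase_lbl big_filter_cond.
rewrite [RHS](bigID (fun e : nat * bool => e.1 \in [:: a])) /=.
rewrite [X in (_ = X + _)%R]big_seq_cond [X in (_ = X + _)%R]big1 ?add0r; last first.
  move=> e /andP [ej /andP [/andP [t hk] ea]]; exfalso.
  move: ea; rewrite inE => /eqP ea.
  have [i [h1 h2]] := adj_in Hadj.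
  have af : (a, false) \in circ D' i by case: h Hadj h1 h2 => /= _ ? ?.
  have at_ : (a, true) \in circ D' i by case: h Hadj h1 h2 => /= _ ? ?.
  move: e ej t hk ea => [x []] //= ej _ hk ea; subst x.
  have ji := same_circ w ej af.
  have ki := same_circ w hk at_.
  by move: jk; rewrite ji ki eqxx.
apply: eq_big => e.
  rewrite /head_on Hc /erase_lbl mem_filter /=.
  by case: (e.1 \in _); case: (~~ e.2); case: (_ \in _).
by move=> /andP [ne _]; rewrite Hs //; move: ne; rewrite inE.
Qed.

Lemma R2_vlk D D' : wf D' -> R2_step D D' -> forall j k, vlk D j k = vlk D' j k.
Proof.
move=> w [a [b [ab [sab [Ht [Hh [Hc Hs]]]]]]] j k.
rewrite /vlk Hc /erase_lbl big_filter_cond.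
rewrite [RHS](bigID (fun e : nat * bool => e.1 \in [:: a; b])) /=.
rewrite [X in (_ = X + _)%R](@sum_L _ [:: (a, false); (a, true); (b, false); (b, true)]); first last.
- move=> [x []]; rewrite !inE /= !xpair_eqE /= ?andbT ?andbF ?orbF //.
- rewrite /= !inE !xpair_eqE /= ?andbT ?andbF ?orbF ?(eq_sym b a) ab //.
- exact: wf_uniq.
rewrite !big_cons big_nil /=.
have E1 : ((b, false) \in circ D' j) = ((a, false) \in circ D' j).
  by rewrite (adj_mem j w Ht).
have E2 : head_on D' b k = head_on D' a k.
  rewrite /head_on; case: Hh => H; first by rewrite (adj_mem k w H).
  by rewrite (adj_mem k w H).
rewrite E1 E2 sab.
have -> : (\sum_(i <- circ D' j | [&& i.1 \notin [:: a; b], ~~ i.2 & head_on D i.1 k])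
           sgnz (sgn D i.1) =
         \sum_(i <- circ D' j | ~~ i.2 && head_on D' i.1 k && (i.1 \notin [:: a; b]))
           sgnz (sgn D' i.1))%R.
  apply: eq_big => e.
    rewrite /head_on Hc /erase_lbl mem_filter /=.
    by case: (e.1 \in _); case: (~~ e.2); case: (_ \in _).
  by move=> /andP [ne _]; rewrite Hs.
rewrite -[LHS]add0r; congr (_ + _)%R.
by case: (head_on D' a k); case: (_ \in _); case: (sgn D' b); rewrite /= ?addr0 /sgnz //= ?addrN ?addNr.
Qed.

End H2.

Section H3.
Variable n : nat.
Implicit Types D : gauss n.

Lemma R3_perm D D' : wf D -> R3_step D D' -> forall i, perm_eq (circ D' i) (circ D i).
Proof.
move=> w [a [b [c [oT [oM [oB [_ [H1 [H2 [H3 [_ [Hc _]]]]]]]]]]]] i.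
rewrite Hc; apply: perm_map_self; first exact: wf_uniq.
  move=> e1 e2 E.
  apply: (inv_inj (swK (b, true) (c, true))).
  apply: (inv_inj (swK (a, true) (c, false))).
  apply: (inv_inj (swK (a, false) (b, false))).
  exact: E.
move=> e ei.
apply: sw_mem; first exact: (adjo_mem i w H1).
apply: sw_mem; first exact: (adjo_mem i w H2).
apply: sw_mem; first exact: (adjo_mem i w H3).
exact: ei.
Qed.

Lemma forb_perm D D' : wf D -> forb_step D D' -> forall i, perm_eq (circ D' i) (circ D i).
Proof.
move=> w [a [b [h [_ [H1 [Hc _]]]]]] i.
rewrite Hc; apply: perm_map_self; first exact: wf_uniq.
  exact: (inv_inj (swK _ _)).
move=> e ei.
apply: sw_mem; first exact: (adj_mem i w H1).
exact: ei.
Qed.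

Definition Rel D1 D2 := exists s : 'S_n, forall j k, j != k -> vlk D2 j k = vlk D1 (s j) (s k).

Lemma Rel_refl D : Rel D D.
Proof. by exists 1%g => j k _; rewrite !perm1. Qed.

Lemma Rel_eq D D' : (forall j k, j != k -> vlk D' j k = vlk D j k) -> Rel D D'.
Proof. by move=> H; exists 1%g => j k jk; rewrite !perm1 H. Qed.

Lemma Rel_sym D1 D2 : Rel D1 D2 -> Rel D2 D1.
Proof.
move=> [s Hs]; exists s^-1%g => j k jk.
rewrite Hs ?permKV //.
by apply: contra jk => /eqP /perm_inj ->.
Qed.

Lemma Rel_trans D1 D2 D3 : Rel D1 D2 -> Rel D2 D3 -> Rel D1 D3.
Proof.
move=> [s Hs] [t Ht]; exists (t * s)%g => j k jk.
rewrite Ht // Hs ?permM //.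
by apply: contra jk => /eqP /perm_inj ->.
Qed.

Lemma step_Rel D D' : FR_step D D' -> Rel D D'.
Proof.
case=> [[w [w' [H|[H|[H|[H|[H|H]]]]]]] | [w [w' H]]].
- apply: Rel_eq => j k _.
  apply: vlk_perm => //; last by case: H => [i [m [_ [_ ?]]]].
  case: H => [i [m [E [E' _]]]] i'.
  have [->|ne] := eqVneq i' i; first by rewrite E perm_rot.
  by rewrite E'.
- apply: Rel_eq => j k _.
  case: H => [f [fi [Hc Hs]]].
  rewrite /vlk Hc big_map; apply: eq_big => e /=.
    rewrite /head_on Hc.
    have -> : (f e.1, true) = (fun e => (f e.1, e.2)) (e.1, true) by [].
    rewrite mem_map //.
    by move=> [x1 y1] [x2 y2] /= [/fi -> ->].
  by rewrite Hs.
- case: H => [s [Hc Hs]]; exists s => j k _.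
  rewrite /vlk /head_on Hc; apply: eq_big => e; first by rewrite Hc.
  by rewrite Hs.
- by apply: Rel_eq => j k jk; rewrite (R1_vlk w' H jk).
- by apply: Rel_eq => j k _; rewrite (R2_vlk w' H).
- apply: Rel_eq => j k _; apply: vlk_perm; first exact: R3_perm H.
  by case: H => [a [b [c [oT [oM [oB [_ [_ [_ [_ [_ [_ ?]]]]]]]]]]]].
- apply: Rel_eq => j k _; apply: vlk_perm; first exact: forb_perm H.
  by case: H => [a [b [h [_ [_ [_ ?]]]]]].
Qed.

Lemma clos_Rel (R : relation (gauss n)) : (forall x y, R x y -> Rel x y) ->
  forall x y, clos_refl_sym_trans _ R x y -> Rel x y.
Proof.
move=> HR x y H; induction H.
- exact: HR.
- exact: Rel_refl.
- exact: Rel_sym.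
- exact: Rel_trans IHclos_refl_sym_trans1 IHclos_refl_sym_trans2.
Qed.

Lemma sum_const_seq (T : Type) (l : seq T) (c : int) :
  (\sum_(e <- l) c = c *+ size l)%R.
Proof. by elim: l => [|x l IH]; rewrite ?big_nil ?big_cons ?IH ?mulrS. Qed.

Lemma fq_vlk D j k : reduced D -> fq_label D j k = vlk D j k.
Proof.
move=> [w [Hd Hr]].
rewrite /fq_label /vlk /arrows -big_filter.
set l := filter _ _.
have Hl : forall e e', e \in l -> e' \in l -> sgn D e.1 = sgn D e'.1.
  move=> e e0 el e0l.
  move: el; rewrite /l mem_filter => /andP [/andP [t hk] ej].
  move: e0l; rewrite /l mem_filter => /andP [/andP [t0 hk0] e0j].
  apply: (Hr j k) => //.
  - by rewrite /tail_on; move: t ej; case: (e) => x [].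
  - by rewrite /tail_on; move: t0 e0j; case: (e0) => x [].
move: Hl; rewrite -/l; case: l => [|e0 l'] Hl.
  by rewrite big_nil /= mulr0.
rewrite (eq_big_seq (fun=> sgnz (sgn D e0.1))); last first.
  by move=> e el; rewrite (Hl e e0 el) // inE eqxx.
by rewrite sum_const_seq size_map -mulr_natr natz.
Qed.

Lemma vlk_diag D j : reduced D -> vlk D j j = 0%R.
Proof.
move=> [w [Hd Hr]]; rewrite /vlk big1_seq // => e /andP [/andP [t hk] ej].
exfalso; have := Hd j e.1; rewrite hk andbT /tail_on.
by move: t ej; case: (e) => x [] //= _ ->.
Qed.

End H3.

Theorem mainTheorem2 (n : nat) (D1 D2 R1 R2 : gauss n) :
  wf D1 -> wf D2 -> link_equiv D1 D2 ->
  FR_equiv D1 R1 -> reduced R1 ->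
  FR_equiv D2 R2 -> reduced R2 ->
  exists s : 'S_n,
    FM R2 = (perm_mx s *m FM R1 *m invmx (perm_mx s))%R.
Proof.
move=> w1 w2 L12 F1 r1 F2 r2.
have H12 : Rel D1 D2.
  by apply: (clos_Rel (R := @reid_step n)) L12 => x y h; apply: step_Rel; left.
have H1 : Rel D1 R1 by apply: (clos_Rel (R := @FR_step n)) F1 => x y h; apply: step_Rel.
have H2 : Rel D2 R2 by apply: (clos_Rel (R := @FR_step n)) F2 => x y h; apply: step_Rel.
have [s Hs] : Rel R1 R2 := Rel_trans (Rel_trans (Rel_sym H1) H12) H2.
exists s.
have Pinv : invmx (perm_mx s) = perm_mx (s^-1)%g :> 'M[int]_n.
  have U := unitmx_perm int s.
  by rewrite -[LHS]mul1mx -perm_mx1 -(mulVg s) perm_mxM -mulmxA mulmxV ?mulmx1.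
rewrite Pinv -row_permE -col_permE; apply/matrixP => i j; rewrite !mxE.
rewrite !fq_vlk //.
case: (eqVneq i j) => [->|ij]; first by rewrite !vlk_diag.
exact: Hs.
Qed.
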